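(* Let $A$ be an associative unital ring and $\mathfrak{C}$ an $A$-coring with coproduct $\Delta$ and counit $\varepsilon$ (Sweedler notation $\Delta(c)=c_{(1)}\otimes_A c_{(2)}$). Consider pairs $(\pi,\Theta)$, where $\Theta:A\to\mathfrak{C}$ is an $(A,A)$-bimodule map and $\pi:\mathfrak{C}\otimes_A\mathfrak{C}\to\mathfrak{C}$ is an $(A,A)$-bimodule map which is a $(\mathfrak{C},\mathfrak{C})$-bicomodule map, i.e. $c_{(1)}\otimes_A\pi(c_{(2)}\otimes_A c')=\Delta(\pi(c\otimes_A c'))=\pi(c\otimes_A c'_{(1)})\otimes_A c'_{(2)}$ for all $c,c'\in\mathfrak{C}$, such that $\pi\circ(I_{\mathfrak{C}}\otimes_A\Theta)=\pi\circ(\Theta\otimes_A I_{\mathfrak{C}})=I_{\mathfrak{C}}$ (using the identifications $\mathfrak{C}\cong\mathfrak{C}\otimes_A A\cong A\otimes_A\mathfrak{C}$). Consider also reduced Frobenius systems $(\gamma,e)$ for $\mathfrak{C}$, i.e. pairs consisting of an element $e\in\mathfrak{C}^A=\{c\in\mathfrak{C}\mid ac=ca\ \forall a\in A\}$ and an $(A,A)$-bimodule map $\gamma:\mathfrak{C}\otimes_A\mathfrak{C}\to A$ such that for all $c,c'\in\mathfrak{C}$: $c_{(1)}\gamma(c_{(2)}\otimes_A c')=\gamma(c\otimes_A c'_{(1)})c'_{(2)}$ and $\gamma(c\otimes_A e)=\gamma(e\otimes_A c)=\varepsilon(c)$. Then the pairs $(\pi,\Theta)$ are in one-to-one correspondence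 with the reduced Frobenius systems $(\gamma,e)$, via $(\pi,\Theta)\mapsto(\varepsilon\circ\pi,\Theta(1_A))$.
   Context: An $A$-coring $\mathfrak{C}$ is an $(A,A)$-bimodule with $(A,A)$-bimodule maps $\Delta:\mathfrak{C}\to\mathfrak{C}\otimes_A\mathfrak{C}$ and $\varepsilon:\mathfrak{C}\to A$ satisfying coassociativity $(I_{\mathfrak{C}}\otimes_A\Delta)\circ\Delta=(\Delta\otimes_A I_{\mathfrak{C}})\circ\Delta$ and counitality $(I_{\mathfrak{C}}\otimes_A\varepsilon)\circ\Delta=(\varepsilon\otimes_A I_{\mathfrak{C}})\circ\Delta=I_{\mathfrak{C}}$. The $(\mathfrak{C},\mathfrak{C})$-bicomodule structures are: on $\mathfrak{C}$ both coactions are $\Delta$; on $\mathfrak{C}\otimes_A\mathfrak{C}$ the left coaction is $\Delta\otimes_A I_{\mathfrak{C}}$ and the right coaction is $I_{\mathfrak{C}}\otimes_A\Delta$. *)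

(* Defs.v *)
(* There is no tensor product over a non-commutative ring in the libraries,
   so tensor products M (x)_A N are given as (A,A)-bimodules T together with
   a map t : M -> N -> T satisfying the universal property of M (x)_A N. *)
From HB Require Import structures.
From mathcomp Require Import all_boot all_order all_algebra.
Set Implicit Arguments. Unset Strict Implicit. Unset Printing Implicit Defensive.
Import GRing.Theory.
Local Open Scope ring_scope.

Definition additive_map {U V : zmodType} (f : U -> V) : Prop :=
  forall x y, f (x + y) = f x + f y.

Definition bimod_axioms (A : pzRingType) (M : zmodType)
  (l : A -> M -> M) (r : M -> A -> M) : Prop :=
  (forall a, additive_map (l a)) /\ (forall m, additive_map (fun a => l a m)) /\
  (forall a b m, l (a * b) m = l a (l b m)) /\ (forall m, l 1 m = m) /\
  (forall m, additive_map (r m)) /\ (forall a, additive_map (fun m => r m a)) /\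
  (forall m a b, r m (a * b) = r (r m a) b) /\ (forall m, r m 1 = m) /\
  (forall a m b, l a (r m b) = r (l a m) b).

Record bimod (A : pzRingType) := Bimod {
  bcar :> zmodType;
  lact : A -> bcar -> bcar;
  ract : bcar -> A -> bcar;
  bimodP : bimod_axioms lact ract }.
Arguments lact {A M} : rename.
Arguments ract {A M} : rename.

Definition bimod_map {A : pzRingType} {M N : bimod A} (f : M -> N) : Prop :=
  [/\ additive_map f, (forall a m, f (lact a m) = lact a (f m))
    & (forall m a, f (ract m a) = ract (f m) a)].
Definition bimod_map_toA {A : pzRingType} {M : bimod A} (f : M -> A) : Prop :=
  [/\ additive_map f, (forall a m, f (lact a m) = a * f m)
    & (forall m a, f (ract m a) = f m * a)].
Definition bimod_map_fromA {A : pzRingType} {M : bimod A} (f : A -> M) : Prop :=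
  [/\ additive_map f, (forall a x, f (a * x) = lact a (f x))
    & (forall x a, f (x * a) = ract (f x) a)].

Definition is_tensor {A : pzRingType} {M N T : bimod A} (t : M -> N -> T) : Prop :=
  (forall m, additive_map (t m)) /\ (forall n, additive_map (fun m => t m n)) /\
  (forall m a n, t (ract m a) n = t m (lact a n)) /\
  (forall a m n, lact a (t m n) = t (lact a m) n) /\
  (forall m n a, ract (t m n) a = t m (ract n a)) /\
      (forall (Z : zmodType) (f : M -> N -> Z),
         (forall m, additive_map (f m)) -> (forall n, additive_map (fun m => f m n)) ->
         (forall m a n, f (ract m a) n = f m (lact a n)) ->
         exists g : T -> Z, additive_map g /\ forall m n, g (t m n) = f m n) /\
      (forall (Z : zmodType) (g h : T -> Z), additive_map g -> additive_map h ->
         (forall m n, g (t m n) = h (t m n)) -> g = h).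

Definition ext_on {A : pzRingType} {M N T : bimod A} (t : M -> N -> T)
  {Z : zmodType} (F : T -> Z) (f : M -> N -> Z) : Prop :=
  additive_map F /\ forall m n, F (t m n) = f m n.

Section Coring.
Variables (A : pzRingType) (C C2 C3l C3r : bimod A).
(* C2 = C (x) C,  C3l = C (x) (C (x) C),  C3r = (C (x) C) (x) C,
   al : C3r -> C3l and be : C3l -> C3r the associativity isomorphisms *)
Variables (t2 : C -> C -> C2) (t3l : C -> C2 -> C3l) (t3r : C2 -> C -> C3r).
Variables (al : C3r -> C3l) (be : C3l -> C3r).
Variables (Delta : C -> C2) (eps : C -> A).

Definition is_coring : Prop :=
  [/\ bimod_map Delta, bimod_map_toA eps,
      (* coassociativity (I (x) Delta) o Delta = (Delta (x) I) o Delta *)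
      (forall (ID : C2 -> C3l) (DI : C2 -> C3r),
         ext_on t2 ID (fun c c' => t3l c (Delta c')) ->
         ext_on t2 DI (fun c c' => t3r (Delta c) c') ->
         forall c, ID (Delta c) = al (DI (Delta c))),
      (* (I (x) eps) o Delta = I, with C (x) A = C *)
      (forall F : C2 -> C, ext_on t2 F (fun c c' => ract c (eps c')) ->
         forall c, F (Delta c) = c)
    & (* (eps (x) I) o Delta = I, with A (x) C = C *)
      (forall F : C2 -> C, ext_on t2 F (fun c c' => lact (eps c) c') ->
         forall c, F (Delta c) = c)].

Definition pi_theta (pi : C2 -> C) (Theta : A -> C) : Prop :=
  [/\ bimod_map pi, bimod_map_fromA Theta,
      (* c(1) (x) pi(c(2) (x) c') = Delta (pi (c (x) c')) *)
      (forall (DI : C2 -> C3r) (Ipi : C3l -> C2),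
         ext_on t2 DI (fun c c' => t3r (Delta c) c') ->
         ext_on t3l Ipi (fun c x => t2 c (pi x)) ->
         forall c c', Ipi (al (DI (t2 c c'))) = Delta (pi (t2 c c'))),
      (* pi(c (x) c'(1)) (x) c'(2) = Delta (pi (c (x) c')) *)
      (forall (ID : C2 -> C3l) (piI : C3r -> C2),
         ext_on t2 ID (fun c c' => t3l c (Delta c')) ->
         ext_on t3r piI (fun x c => t2 (pi x) c) ->
         forall c c', piI (be (ID (t2 c c'))) = Delta (pi (t2 c c')))
    & (* pi o (I (x) Theta) = pi o (Theta (x) I) = I *)
      (forall c, pi (t2 c (Theta 1)) = c /\ pi (t2 (Theta 1) c) = c)].

Definition reduced_frobenius (gamma : C2 -> A) (e : C) : Prop :=
  [/\ bimod_map_toA gamma,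
      (forall a, lact a e = ract e a),
      (* c(1) gamma(c(2) (x) c') = gamma(c (x) c'(1)) c'(2) *)
      (forall (DI : C2 -> C3r) (Igam : C3l -> C) (ID : C2 -> C3l) (gamI : C3r -> C),
         ext_on t2 DI (fun c c' => t3r (Delta c) c') ->
         ext_on t3l Igam (fun c x => ract c (gamma x)) ->
         ext_on t2 ID (fun c c' => t3l c (Delta c')) ->
         ext_on t3r gamI (fun x c => lact (gamma x) c) ->
         forall c c', Igam (al (DI (t2 c c'))) = gamI (be (ID (t2 c c'))))
    & (forall c, gamma (t2 c e) = eps c /\ gamma (t2 e c) = eps c)].
End Coring.

(* Main.v *)
Require Import Defs.
From mathcomp Require Import all_boot all_order all_algebra.
From Stdlib Require Import FunctionalExtensionality.
Set Implicit Arguments. Unset Strict Implicit. Unset Printing Implicit Defensive.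
Import GRing.Theory.
Local Open Scope ring_scope.

Section Bim.
Variables (A : pzRingType) (M : bimod A).
Lemma lactD a : additive_map (@lact A M a). Proof. by case: (bimodP M). Qed.
Lemma lactDl (m : M) : additive_map (fun a => lact a m). Proof. by case: (bimodP M) => _ []. Qed.
Lemma lactM a b (m : M) : lact (a * b) m = lact a (lact b m). Proof. by case: (bimodP M) => _ [] _ []. Qed.
Lemma lact1 (m : M) : lact 1 m = m. Proof. by case: (bimodP M) => _ [] _ [] _ []. Qed.
Lemma ractD (m : M) : additive_map (ract m). Proof. by case: (bimodP M) => _ [] _ [] _ [] _ []. Qed.
Lemma ractDl a : additive_map (fun m : M => ract m a). Proof. by case: (bimodP M) => _ [] _ [] _ [] _ [] _ []. Qed.
Lemma ractM (m : M) a b : ract m (a * b) = ract (ract m a) b. Proof. by case: (bimodP M) => _ [] _ [] _ [] _ [] _ [] _ []. Qed.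
Lemma ract1 (m : M) : ract m 1 = m. Proof. by case: (bimodP M) => _ [] _ [] _ [] _ [] _ [] _ [] _ []. Qed.
Lemma lact_ract a (m : M) b : lact a (ract m b) = ract (lact a m) b. Proof. by case: (bimodP M) => _ [] _ [] _ [] _ [] _ [] _ [] _ []. Qed.
End Bim.

Lemma add_comp (U V W : zmodType) (f : U -> V) (g : V -> W) :
  additive_map f -> additive_map g -> additive_map (fun x => g (f x)).
Proof. by move=> hf hg x y; rewrite hf hg. Qed.

Section Tens.
Variables (A : pzRingType) (M N T : bimod A) (t : M -> N -> T) (Ht : is_tensor t).
Lemma tA1 m : additive_map (t m). Proof. by case: Ht. Qed.
Lemma tA2 n : additive_map (fun m => t m n). Proof. by case: Ht => _ []. Qed.
Lemma tbal m a n : t (ract m a) n = t m (lact a n). Proof. by case: Ht => _ [] _ []. Qed.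
Lemma tlact a m n : lact a (t m n) = t (lact a m) n. Proof. by case: Ht => _ [] _ [] _ []. Qed.
Lemma tract m n a : ract (t m n) a = t m (ract n a). Proof. by case: Ht => _ [] _ [] _ [] _ []. Qed.
Lemma tuniq (Z : zmodType) (g h : T -> Z) : additive_map g -> additive_map h ->
  (forall m n, g (t m n) = h (t m n)) -> g = h.
Proof. by case: Ht => _ [] _ [] _ [] _ [] _ [] _ H; apply: H. Qed.
Lemma tex (Z : zmodType) (f : M -> N -> Z) :
  (forall m, additive_map (f m)) -> (forall n, additive_map (fun m => f m n)) ->
  (forall m a n, f (ract m a) n = f m (lact a n)) -> exists g, ext_on t g f.
Proof. by case: Ht => _ [] _ [] _ [] _ [] _ [] H _; apply: H. Qed.
Lemma ext_unique (Z : zmodType) (g h : T -> Z) f : ext_on t g f -> ext_on t h f -> g = h.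
Proof. by move=> [ag eg] [ah eh]; apply: tuniq => // m n; rewrite eg eh. Qed.

Lemma ext_ract (g : N -> A) : additive_map g -> (forall a n, g (lact a n) = a * g n) ->
  exists G : T -> M, ext_on t G (fun m n => ract m (g n)).
Proof.
move=> ag lg; apply: tex.
- by move=> m x y; rewrite ag ractD.
- by move=> n x y; rewrite ractDl.
- by move=> m a n; rewrite lg ractM.
Qed.
Lemma ext_lact (g : M -> A) : additive_map g -> (forall m a, g (ract m a) = g m * a) ->
  exists G : T -> N, ext_on t G (fun m n => lact (g m) n).
Proof.
move=> ag rg; apply: tex.
- by move=> m x y; rewrite lactD.
- by move=> n x y; rewrite ag lactDl.
- by move=> m a n; rewrite rg lactM.
Qed.
End Tens.
Section Tens2.
Variables (A : pzRingType) (M N T : bimod A) (t : M -> N -> T) (Ht : is_tensor t).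
Lemma ext_right (P S : bimod A) (s : M -> P -> S) (f : N -> P) : is_tensor s ->
  additive_map f -> (forall a n, f (lact a n) = lact a (f n)) ->
  exists G : T -> S, ext_on t G (fun m n => s m (f n)).
Proof.
move=> Hs af lf; apply: (tex Ht).
- by move=> m x y; rewrite af (tA1 Hs).
- by move=> n x y; rewrite (tA2 Hs).
- by move=> m a n; rewrite lf (tbal Hs).
Qed.
Lemma ext_left (P S : bimod A) (s : P -> N -> S) (f : M -> P) : is_tensor s ->
  additive_map f -> (forall m a, f (ract m a) = ract (f m) a) ->
  exists G : T -> S, ext_on t G (fun m n => s (f m) n).
Proof.
move=> Hs af rf; apply: (tex Ht).
- by move=> m x y; rewrite (tA1 Hs).
- by move=> n x y; rewrite af (tA2 Hs).
- by move=> m a n; rewrite rf (tbal Hs).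
Qed.
End Tens2.

Lemma uniq3r (A : pzRingType) (M N T P S : bimod A) (t : M -> N -> T) (s : T -> P -> S) :
  is_tensor t -> is_tensor s -> forall (Z : zmodType) (g h : S -> Z),
  additive_map g -> additive_map h ->
  (forall u v w, g (s (t u v) w) = h (s (t u v) w)) -> g = h.
Proof.
move=> Ht Hs Z g h ag ah E; apply: (tuniq Hs) => // y w.
have := @tuniq _ _ _ _ _ Ht Z (fun y => g (s y w)) (fun y => h (s y w)).
move=> /(_ (add_comp (tA2 Hs w) ag) (add_comp (tA2 Hs w) ah) (fun u v => E u v w)) H.
exact: (congr1 (fun F => F y) H).
Qed.
Lemma uniq3l (A : pzRingType) (M N T P S : bimod A) (t : N -> P -> T) (s : M -> T -> S) :
  is_tensor t -> is_tensor s -> forall (Z : zmodType) (g h : S -> Z),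
  additive_map g -> additive_map h ->
  (forall u v w, g (s u (t v w)) = h (s u (t v w))) -> g = h.
Proof.
move=> Ht Hs Z g h ag ah E; apply: (tuniq Hs) => // u y.
have := @tuniq _ _ _ _ _ Ht Z (fun y => g (s u y)) (fun y => h (s u y)).
move=> /(_ (add_comp (tA1 Hs u) ag) (add_comp (tA1 Hs u) ah) (fun v w => E u v w)) H.
exact: (congr1 (fun F => F y) H).
Qed.

Lemma funeq (U V : Type) (f g : U -> V) : f = g -> forall x, f x = g x.
Proof. by move->. Qed.

Section Main.
Variables (A : pzRingType) (C C2 C3l C3r : bimod A)
  (t2 : C -> C -> C2) (t3l : C -> C2 -> C3l) (t3r : C2 -> C -> C3r)
  (al : C3r -> C3l) (be : C3l -> C3r) (Delta : C -> C2) (eps : C -> A).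
Hypotheses (H2 : is_tensor t2) (H3l : is_tensor t3l) (H3r : is_tensor t3r)
  (alA : additive_map al) (alE : forall x y z, al (t3r (t2 x y) z) = t3l x (t2 y z))
  (beA : additive_map be) (beE : forall x y z, be (t3l x (t2 y z)) = t3r (t2 x y) z)
  (Hcor : is_coring t2 t3l t3r al Delta eps).

Lemma DA : additive_map Delta. Proof. by case: Hcor => -[]. Qed.
Lemma Dl a c : Delta (lact a c) = lact a (Delta c). Proof. by case: Hcor => -[]. Qed.
Lemma Dr c a : Delta (ract c a) = ract (Delta c) a. Proof. by case: Hcor => -[]. Qed.
Lemma eA : additive_map eps. Proof. by case: Hcor => _ []. Qed.
Lemma el a c : eps (lact a c) = a * eps c. Proof. by case: Hcor => _ []. Qed.
Lemma er c a : eps (ract c a) = eps c * a. Proof. by case: Hcor => _ []. Qed.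
Lemma coass (ID : C2 -> C3l) (DI : C2 -> C3r) :
  ext_on t2 ID (fun c c' => t3l c (Delta c')) ->
  ext_on t2 DI (fun c c' => t3r (Delta c) c') ->
  forall c, ID (Delta c) = al (DI (Delta c)).
Proof. by case: Hcor => _ _ H _ _; apply: H. Qed.
Lemma cr (F : C2 -> C) : ext_on t2 F (fun c c' => ract c (eps c')) -> forall c, F (Delta c) = c.
Proof. by case: Hcor => _ _ _ H _; apply: H. Qed.
Lemma cl (F : C2 -> C) : ext_on t2 F (fun c c' => lact (eps c) c') -> forall c, F (Delta c) = c.
Proof. by case: Hcor => _ _ _ _ H; apply: H. Qed.

Lemma DI0 : exists DI, ext_on t2 DI (fun c c' => t3r (Delta c) c').
Proof. exact: (ext_left H2 H3r DA Dr). Qed.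
Lemma ID0 : exists ID, ext_on t2 ID (fun c c' => t3l c (Delta c')).
Proof. exact: (ext_right H2 H3l DA Dl). Qed.
Lemma F0 : exists F : C2 -> C, ext_on t2 F (fun c c' => ract c (eps c')).
Proof. exact: (ext_ract H2 eA el). Qed.
Lemma G0 : exists G : C2 -> C, ext_on t2 G (fun c c' => lact (eps c) c').
Proof. exact: (ext_lact H2 eA er). Qed.

Lemma part1 pi Theta : pi_theta t2 t3l t3r al be Delta pi Theta ->
  reduced_frobenius t2 t3l t3r al be Delta eps (fun x => eps (pi x)) (Theta 1).
Proof.
case=> [[pA pl pr] [TA Tl Tr] Hlc Hrc Hu]; split.
- split; first exact: add_comp pA eA.
  + by move=> a m; rewrite pl el.
  + by move=> m a; rewrite pr er.
- by move=> a; rewrite -Tl -Tr mulr1 mul1r.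
- move=> DI Igam ID gamI hDI hIg hID hgI c c'.
  have [Ipi hIpi] := ext_right H3l H2 pA pl.
  have [piI hpiI] := ext_left H3r H2 pA pr.
  have [F hF] := F0; have [G hG] := G0.
  have E1 : Igam = fun z => F (Ipi z).
    apply: (tuniq H3l); [exact: hIg.1 | exact: add_comp hIpi.1 hF.1 |].
    by move=> m n; rewrite hIg.2 hIpi.2 hF.2.
  have E2 : gamI = fun z => G (piI z).
    apply: (tuniq H3r); [exact: hgI.1 | exact: add_comp hpiI.1 hG.1 |].
    by move=> m n; rewrite hgI.2 hpiI.2 hG.2.
  rewrite E1 E2 (Hlc DI Ipi hDI hIpi) (Hrc ID piI hID hpiI).
  by rewrite (cr hF) (cl hG).
- by move=> c; case: (Hu c) => -> ->.
Qed.

Lemma part2 pi Theta pi' Theta' :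
  pi_theta t2 t3l t3r al be Delta pi Theta ->
  pi_theta t2 t3l t3r al be Delta pi' Theta' ->
  (fun x => eps (pi x)) = (fun x => eps (pi' x)) -> Theta 1 = Theta' 1 ->
  pi = pi' /\ Theta = Theta'.
Proof.
move=> [[pA pl pr] [TA Tl Tr] Hlc _ _] [[pA' pl' pr'] [TA' Tl' Tr'] Hlc' _ _] Eg E1.
split.
- have [DI hDI] := DI0.
  have [Ipi hIpi] := ext_right H3l H2 pA pl.
  have [Ipi' hIpi'] := ext_right H3l H2 pA' pl'.
  have [F hF] := F0.
  have E : (fun z => F (Ipi z)) = (fun z => F (Ipi' z)).
    apply: (tuniq H3l); [exact: add_comp hIpi.1 hF.1 | exact: add_comp hIpi'.1 hF.1 |].
    move=> m n; rewrite hIpi.2 hIpi'.2 !hF.2.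
    by rewrite (funeq Eg n).
  apply: (tuniq H2) => // c c'.
  rewrite -[LHS](cr hF) -[RHS](cr hF) -(Hlc DI Ipi hDI hIpi) -(Hlc' DI Ipi' hDI hIpi').
  exact: (funeq E).
- apply: functional_extensionality => a.
  by rewrite -[a]mulr1 Tl Tl' E1.
Qed.

Lemma part3 gamma e : reduced_frobenius t2 t3l t3r al be Delta eps gamma e ->
  exists pi Theta, [/\ pi_theta t2 t3l t3r al be Delta pi Theta,
                       (fun x => eps (pi x)) = gamma & Theta 1 = e].
Proof.
move=> [[gA gl gr] eC Hfr He].
have [DI hDI] := DI0; have [ID hID] := ID0; have [F hF] := F0; have [G hG] := G0.
have [Igam hIg] := ext_ract H3l gA gl.
have [gamI hgI] := ext_lact H3r gA gr.
pose P := fun z => Igam (al z).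
pose Q := fun z => gamI (be z).
have Pt u v w : P (t3r (t2 u v) w) = ract u (gamma (t2 v w)) by rewrite /P alE hIg.2.
have Qt u v w : Q (t3l u (t2 v w)) = lact (gamma (t2 u v)) w by rewrite /Q beE hgI.2.
have PA : additive_map P := add_comp alA hIg.1.
have QA : additive_map Q := add_comp beA hgI.1.
have Pl a z : P (lact a z) = lact a (P z).
  move: z; apply: funeq; apply: (uniq3r H2 H3r).
  - exact: add_comp (lactD a) PA.
  - exact: add_comp PA (lactD a).
  by move=> u v w; rewrite (tlact H3r) (tlact H2) !Pt lact_ract.
have Pr a z : P (ract z a) = ract (P z) a.
  move: z; apply: funeq; apply: (uniq3r H2 H3r).
  - exact: add_comp (ractDl a) PA.
  - exact: add_comp PA (ractDl a).
  by move=> u v w; rewrite (tract H3r) !Pt -(tract H2) gr ractM.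
have Qr a z : Q (ract z a) = ract (Q z) a.
  move: z; apply: funeq; apply: (uniq3l H2 H3l).
  - exact: add_comp (ractDl a) QA.
  - exact: add_comp QA (ractDl a).
  by move=> u v w; rewrite (tract H3l) (tract H2) !Qt lact_ract.
pose pi := fun x => P (DI x).
have piA : additive_map pi := add_comp hDI.1 PA.
have pi_t2 c c' : pi (t2 c c') = P (t3r (Delta c) c') by rewrite /pi hDI.2.
have piQ x : pi x = Q (ID x).
  move: x; apply: funeq; apply: (tuniq H2) => //; first exact: add_comp hID.1 QA.
  by move=> c c'; exact: (Hfr DI Igam ID gamI hDI hIg hID hgI c c').
have pil a x : pi (lact a x) = lact a (pi x).
  move: x; apply: funeq; apply: (tuniq H2).
  - exact: add_comp (lactD a) piA.
  - exact: add_comp piA (lactD a).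
  by move=> c c'; rewrite (tlact H2) !pi_t2 Dl -(tlact H3r) Pl.
have pir a x : pi (ract x a) = ract (pi x) a.
  move: x; apply: funeq; apply: (tuniq H2).
  - exact: add_comp (ractDl a) piA.
  - exact: add_comp piA (ractDl a).
  by move=> c c'; rewrite (tract H2) !pi_t2 -(tract H3r) Pr.
have be_al z : be (al z) = z.
  move: z; apply: funeq; apply: (uniq3r H2 H3r) => //; first exact: add_comp alA beA.
  by move=> u v w; rewrite alE beE.
exists pi, (fun a => lact a e); split.
- split.
  + by split.
  + split; first exact: lactDl.
    * by move=> a x; rewrite lactM.
    * by move=> x a; rewrite lactM eC lact_ract.
  + move=> DI' Ipi hDI' hIpi c c'.
    rewrite (ext_unique H2 hDI' hDI) hDI.2 pi_t2.
    pose f := fun z => P (t3r z c').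
    have fA : additive_map f := add_comp (tA2 H3r c') PA.
    have fl a z : f (lact a z) = lact a (f z) by rewrite /f -(tlact H3r) Pl.
    have [N' hN'] := ext_right H3l H2 fA fl.
    have c1 y : Ipi (al (t3r y c')) = N' (ID y).
      move: y; apply: funeq; apply: (tuniq H2).
      - exact: add_comp (add_comp (tA2 H3r c') alA) hIpi.1.
      - exact: add_comp hID.1 hN'.1.
      by move=> u v; rewrite alE hIpi.2 hID.2 hN'.2 /f pi_t2.
    have c2 v z : N' (al (t3r z v)) = ract z (gamma (t2 v c')).
      move: z; apply: funeq; apply: (tuniq H2).
      - exact: add_comp (add_comp (tA2 H3r v) alA) hN'.1.
      - exact: ractDl.
      by move=> p q; rewrite alE hN'.2 /f Pt (tract H2).
    have c3 y : Delta (P (t3r y c')) = N' (al (DI y)).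
      move: y; apply: funeq; apply: (tuniq H2).
      - exact: add_comp (add_comp (tA2 H3r c') PA) DA.
      - exact: add_comp (add_comp hDI.1 alA) hN'.1.
      by move=> u v; rewrite Pt Dr hDI.2 c2.
    by rewrite c1 c3 (coass hID hDI c).
  + move=> ID' piI hID' hpiI c c'.
    rewrite (ext_unique H2 hID' hID) hID.2 piQ hID.2.
    pose g := fun z => Q (t3l c z).
    have gA' : additive_map g := add_comp (tA1 H3l c) QA.
    have gr' z a : g (ract z a) = ract (g z) a by rewrite /g -(tract H3l) Qr.
    have [N hN] := ext_left H3r H2 gA' gr'.
    have c1 y : piI (be (t3l c y)) = N (DI y).
      move: y; apply: funeq; apply: (tuniq H2).
      - exact: add_comp (add_comp (tA1 H3l c) beA) hpiI.1.
      - exact: add_comp hDI.1 hN.1.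
      by move=> u v; rewrite beE hpiI.2 hDI.2 hN.2 /g piQ hID.2.
    have c2 u z : N (be (t3l u z)) = lact (gamma (t2 c u)) z.
      move: z; apply: funeq; apply: (tuniq H2).
      - exact: add_comp (add_comp (tA1 H3l u) beA) hN.1.
      - exact: lactD.
      by move=> p q; rewrite beE hN.2 /g Qt (tlact H2).
    have c3 y : Delta (Q (t3l c y)) = N (be (ID y)).
      move: y; apply: funeq; apply: (tuniq H2).
      - exact: add_comp (add_comp (tA1 H3l c) QA) DA.
      - exact: add_comp (add_comp hID.1 beA) hN.1.
      by move=> u v; rewrite Qt Dl hID.2 c2.
    by rewrite c1 c3 (coass hID hDI c') be_al.
  + move=> c; rewrite lact1; split.
    * rewrite pi_t2.
      have -> : P (t3r (Delta c) e) = F (Delta c).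
        apply: (funeq (f := fun y => P (t3r y e))); apply: (tuniq H2).
        - exact: add_comp (tA2 H3r e) PA.
        - exact: hF.1.
        by move=> u v; rewrite Pt (He v).1 hF.2.
      exact: (cr hF c).
    * rewrite piQ hID.2.
      have -> : Q (t3l e (Delta c)) = G (Delta c).
        apply: (funeq (f := fun y => Q (t3l e y))); apply: (tuniq H2).
        - exact: add_comp (tA1 H3l e) QA.
        - exact: hG.1.
        by move=> u v; rewrite Qt (He u).2 hG.2.
      exact: (cl hG c).
- apply: (@tuniq _ _ _ _ t2 H2 A (fun x => eps (pi x)) gamma); [exact: add_comp piA eA | exact: gA |].
  move=> c c'; rewrite pi_t2.
  have E : forall y, eps (P (t3r y c')) = gamma (t2 (G y) c').
    apply: funeq; apply: (tuniq H2).
    - exact: add_comp (add_comp (tA2 H3r c') PA) eA.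
    - exact: add_comp (add_comp hG.1 (tA2 H2 c')) gA.
    by move=> u v; rewrite Pt er hG.2 -(tlact H2) gl.
  by rewrite E (cl hG).
- exact: lact1.
Qed.

End Main.

Unset Implicit Arguments.

Theorem lemma2p4 (A : pzRingType) (C C2 C3l C3r : bimod A)
  (t2 : C -> C -> C2) (t3l : C -> C2 -> C3l) (t3r : C2 -> C -> C3r)
  (al : C3r -> C3l) (be : C3l -> C3r) (Delta : C -> C2) (eps : C -> A) :
  is_tensor t2 -> is_tensor t3l -> is_tensor t3r ->
  additive_map al -> (forall x y z, al (t3r (t2 x y) z) = t3l x (t2 y z)) ->
  additive_map be -> (forall x y z, be (t3l x (t2 y z)) = t3r (t2 x y) z) ->
  is_coring t2 t3l t3r al Delta eps ->
  [/\ (forall pi Theta, pi_theta t2 t3l t3r al be Delta pi Theta ->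
         reduced_frobenius t2 t3l t3r al be Delta eps (fun x => eps (pi x)) (Theta 1)),
      (forall pi Theta pi' Theta',
         pi_theta t2 t3l t3r al be Delta pi Theta ->
         pi_theta t2 t3l t3r al be Delta pi' Theta' ->
         (fun x => eps (pi x)) = (fun x => eps (pi' x)) -> Theta 1 = Theta' 1 ->
         pi = pi' /\ Theta = Theta')
    & (forall gamma e, reduced_frobenius t2 t3l t3r al be Delta eps gamma e ->
         exists pi Theta, [/\ pi_theta t2 t3l t3r al be Delta pi Theta,
                              (fun x => eps (pi x)) = gamma & Theta 1 = e])].

Proof.
move=> H2 H3l H3r alA alE beA beE Hcor; split.
- exact: (part1 H2 H3l H3r Hcor).
- exact: (part2 H2 H3l H3r Hcor).
- exact: (part3 H2 H3l H3r alA alE beA beE Hcor).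
Qed.
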